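(* Let $R$ be a right almost perfect ring and let $I\neq 0$ be a two-sided ideal of $R$. Then the following are equivalent: (i) $I$ is a maximal two-sided ideal of $R$; (ii) $I$ is a prime ideal of $R$; (iii) $I$ is a right primitive ideal of $R$ (i.e., $I$ is the annihilator of some simple right $R$-module).
   Context: Rings are associative with identity $1\neq 0$. A ring $R$ is called right almost perfect if $R/I$ is a right perfect ring for every two-sided ideal $I$ of $R$ with $I\neq 0$ and $I\neq R$. *)

(* Defs.v *)
From HB Require Import structures.
From mathcomp Require Import all_boot all_algebra.
Set Implicit Arguments. Unset Strict Implicit. Unset Printing Implicit Defensive.
Import GRing.Theory.
Local Open Scope ring_scope.

Section Ideals.
Variable R : nzRingType.

Definition additive_subgroup (A : R -> Prop) : Prop :=
  A 0 /\ (forall x y, A x -> A y -> A (x - y)).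

Definition right_ideal (A : R -> Prop) : Prop :=
  additive_subgroup A /\ (forall x r, A x -> A (x * r)).

Definition left_ideal (A : R -> Prop) : Prop :=
  additive_subgroup A /\ (forall x r, A x -> A (r * x)).

Definition two_sided_ideal (A : R -> Prop) : Prop :=
  right_ideal A /\ left_ideal A.

Definition proper (A : R -> Prop) : Prop := exists x, ~ A x.

Definition nonzero_set (A : R -> Prop) : Prop := exists x, A x /\ x <> 0.

Definition subset (A B : R -> Prop) : Prop := forall x, A x -> B x.

Definition maximal_right_ideal (A : R -> Prop) : Prop :=
  right_ideal A /\ proper A /\
  (forall B, right_ideal B -> proper B -> subset A B -> subset B A).

Definition maximal_ideal (A : R -> Prop) : Prop :=
  two_sided_ideal A /\ proper A /\
  (forall B, two_sided_ideal B -> proper B -> subset A B -> subset B A).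

Definition prime_ideal (P : R -> Prop) : Prop :=
  two_sided_ideal P /\ proper P /\
  (forall A B, two_sided_ideal A -> two_sided_ideal B ->
     (forall a b, A a -> B b -> P (a * b)) -> subset A P \/ subset B P).

Definition jacobson : R -> Prop :=
  fun x => forall M, maximal_right_ideal M -> M x.

(* rprod a k = a_(k-1) * ... * a_1 * a_0 *)
Fixpoint rprod (a : nat -> R) (k : nat) : R :=
  if k is k'.+1 then a k' * rprod a k' else 1.

Definition right_T_nilpotent (A : R -> Prop) : Prop :=
  forall a : nat -> R, (forall n, A (a n)) -> exists k, rprod a k = 0.

(* semisimple ring: R_R is a semisimple module, i.e. every right ideal is a
   direct summand of R_R *)
Definition semisimple_ring : Prop :=
  forall K, right_ideal K ->
    exists K', right_ideal K' /\ (forall x, K x -> K' x -> x = 0) /\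
               (forall t, exists k k', K k /\ K' k' /\ t = k + k').

(* right modules over R are left modules over the converse ring R^c;
   the right action m.r is  (r : R^c) *: m *)
Definition simple_right_module (M : lmodType R^c) : Prop :=
  (exists m : M, m <> 0) /\
  (forall N : M -> Prop,
     N 0 -> (forall x y, N x -> N y -> N (x - y)) ->
     (forall (r : R^c) x, N x -> N (r *: x)) ->
     (forall x, N x -> x = 0) \/ (forall x, N x)).

Definition right_primitive_ideal (I : R -> Prop) : Prop :=
  exists M : lmodType R^c, simple_right_module M /\
    (forall r : R, I r <-> forall m : M, (r : R^c) *: m = 0).

End Ideals.

(* (S, f) is a quotient ring R/I: f is a surjective ring morphism with
   kernel I.  Quotients are used up to isomorphism. *)
Definition quotient_map (R S : nzRingType) (I : R -> Prop)
  (f : {rmorphism R -> S}) : Prop :=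
  (forall y, exists x, f x = y) /\ (forall x, f x = 0 <-> I x).

(* right perfect (Bass; Lam, FC §23): J = rad R right T-nilpotent and R/J
   semisimple *)
Definition right_perfect (S : nzRingType) : Prop :=
  right_T_nilpotent (@jacobson S) /\
  (forall (T : nzRingType) (f : {rmorphism S -> T}),
      quotient_map (@jacobson S) f -> semisimple_ring T).

Definition right_almost_perfect (R : nzRingType) : Prop :=
  forall I : R -> Prop, two_sided_ideal I -> nonzero_set I -> proper I ->
    forall (S : nzRingType) (f : {rmorphism R -> S}),
      quotient_map I f -> right_perfect S.

(* Main.v *)
Require Import Defs.
From HB Require Import structures.
From mathcomp Require Import all_boot all_algebra.
From Stdlib Require Import ClassicalEpsilon.
Set Implicit Arguments. Unset Strict Implicit. Unset Printing Implicit Defensive.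
Import GRing.Theory.
Local Open Scope ring_scope.
Local Open Scope quotient_scope.

Definition pb (P : Prop) : bool := if excluded_middle_informative P then true else false.
Lemma pbP (P : Prop) : reflect P (pb P).
Proof. rewrite /pb; case: excluded_middle_informative => h; by constructor. Qed.

Section QZ.
Variables (V : zmodType) (K : V -> Prop).
Hypothesis HK : K 0 /\ (forall x y, K x -> K y -> K (x - y)).
Definition Kb (_ : K 0 /\ (forall x y, K x -> K y -> K (x - y))) : {pred V} := fun x => pb (K x).
Lemma Kb_closed : zmod_closed (Kb HK).
Proof.
split; first by apply/pbP; case: HK.
by move=> x y /pbP hx /pbP hy; apply/pbP; case: HK => _; apply.
Qed.
HB.instance Definition _ := GRing.isZmodClosed.Build V (Kb HK) Kb_closed.
Definition QZ := Quotient.quot (Kb HK).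
HB.instance Definition _ := Choice.on QZ.
HB.instance Definition _ := GRing.Zmodule.on QZ.
Definition piZ (x : V) : QZ := \pi_QZ x.
Lemma piZ_eq x y : piZ x = piZ y <-> K (x - y).
Proof.
rewrite /piZ; split.
- move=> h; have : x - y \in Kb HK by rewrite Quotient.idealrBE h.
  by move/pbP.
- move=> h; apply/eqP; rewrite -Quotient.idealrBE; exact/pbP.
Qed.
Lemma piZB x y : piZ (x - y) = piZ x - piZ y.
Proof. by rewrite /piZ !piE. Qed.
Lemma piZ0 : piZ 0 = 0.
Proof. by rewrite /piZ !piE. Qed.
Lemma piZ_surj (q : QZ) : exists x, piZ x = q.
Proof. by exists (repr q); rewrite /piZ reprK. Qed.
End QZ.

Section AS.
Variables (V : zmodType) (A : V -> Prop) (HA : A 0 /\ (forall x y, A x -> A y -> A (x - y))).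
Lemma AS0 : A 0. Proof. by case: HA. Qed.
Lemma ASB x y : A x -> A y -> A (x - y). Proof. by case: HA => _; apply. Qed.
Lemma ASN x : A x -> A (- x).
Proof. by move=> h; rewrite -sub0r; apply: ASB => //; apply: AS0. Qed.
Lemma ASD x y : A x -> A y -> A (x + y).
Proof. by move=> hx hy; rewrite -[y]opprK; apply: ASB => //; apply: ASN. Qed.
End AS.

Section QRing.
Variables (R : nzRingType) (I : R -> Prop).
Hypotheses (HI : two_sided_ideal I) (Hp : Defs.proper I).
Let HK : additive_subgroup I := HI.1.1.
Definition QR (_ : two_sided_ideal I) (_ : Defs.proper I) := QZ HK.
HB.instance Definition _ := Choice.on (QR HI Hp).
HB.instance Definition _ := GRing.Zmodule.on (QR HI Hp).
Definition piR (x : R) : QR HI Hp := piZ HK x.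
Definition mulQ (a b : QR HI Hp) : QR HI Hp := piR (repr a * repr b).
Definition oneQ : QR HI Hp := piR 1.
Lemma piR_eq x y : piR x = piR y <-> I (x - y). Proof. exact: piZ_eq. Qed.
Lemma piR_surj (q : QR HI Hp) : exists x, piR x = q. Proof. exact: piZ_surj. Qed.
Lemma piRB x y : piR (x - y) = piR x - piR y. Proof. exact: piZB. Qed.
Lemma piRD x y : piR (x + y) = piR x + piR y.
Proof.
have hN : piR (- y) = - piR y by rewrite -sub0r piRB /piR piZ0 sub0r.
by rewrite -{1}[y]opprK piRB hN opprK.
Qed.
Lemma piR_mul x y : mulQ (piR x) (piR y) = piR (x * y).
Proof.
rewrite /mulQ piR_eq.
have e1 : I (repr (piR x) - x) by apply/piR_eq; rewrite /piR /piZ reprK.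
have e2 : I (repr (piR y) - y) by apply/piR_eq; rewrite /piR /piZ reprK.
set a := repr (piR x) in e1 *; set b := repr (piR y) in e2 *.
have -> : a * b - x * y = (a - x) * b + x * (b - y).
  by rewrite mulrBl mulrBr addrA subrK.
apply: (ASD HK); first exact: HI.1.2.
exact: HI.2.2.
Qed.
Lemma mulQA : associative mulQ.
Proof.
move=> a b c; case: (piR_surj a) => x <-; case: (piR_surj b) => y <-.
case: (piR_surj c) => z <-; by rewrite !piR_mul mulrA.
Qed.
Lemma mul1Q : left_id oneQ mulQ.
Proof. by move=> a; case: (piR_surj a) => x <-; rewrite /oneQ piR_mul mul1r. Qed.
Lemma mulQ1 : right_id oneQ mulQ.
Proof. by move=> a; case: (piR_surj a) => x <-; rewrite /oneQ piR_mul mulr1. Qed.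
Lemma mulQDl : left_distributive mulQ +%R.
Proof.
move=> a b c; case: (piR_surj a) => x <-; case: (piR_surj b) => y <-.
case: (piR_surj c) => z <-; by rewrite -piRD !piR_mul mulrDl piRD.
Qed.
Lemma mulQDr : right_distributive mulQ +%R.
Proof.
move=> a b c; case: (piR_surj a) => x <-; case: (piR_surj b) => y <-.
case: (piR_surj c) => z <-; by rewrite -piRD !piR_mul mulrDr piRD.
Qed.
Lemma piR0 : piR 0 = 0. Proof. exact: piZ0. Qed.
Lemma oneQ_neq0 : oneQ != 0.
Proof.
apply/eqP; rewrite /oneQ -piR0 piR_eq subr0 => h1.
case: Hp => x; apply; rewrite -[x]mul1r; exact: HI.1.2.
Qed.
HB.instance Definition _ := GRing.Zmodule_isNzRing.Build (QR HI Hp)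
  mulQA mul1Q mulQ1 mulQDl mulQDr oneQ_neq0.
Lemma piR_zmod : zmod_morphism piR.
Proof. exact: piRB. Qed.
HB.instance Definition _ := GRing.isZmodMorphism.Build R (QR HI Hp) piR piR_zmod.
Lemma piR_monoid : monoid_morphism piR.
Proof. by split => // x y; rewrite -piR_mul. Qed.
HB.instance Definition _ := GRing.isMonoidMorphism.Build R (QR HI Hp) piR piR_monoid.
Lemma piR_quot : quotient_map I piR.
Proof.
split; first exact: piR_surj.
by move=> x; rewrite -piR0 piR_eq subr0.
Qed.
End QRing.

Lemma exists_quot_ring (R : nzRingType) (I : R -> Prop) :
  two_sided_ideal I -> Defs.proper I ->
  exists (S : nzRingType) (f : {rmorphism R -> S}), quotient_map I f.
Proof. move=> HI Hp; exists (QR HI HI Hp); exists (piR HI Hp); exact: piR_quot. Qed.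

Section QModule.
Variables (R : nzRingType) (K : R -> Prop).
Hypothesis (HK : right_ideal K).
Let HA : additive_subgroup K := HK.1.
Definition QM (_ : right_ideal K) := QZ HA.
HB.instance Definition _ := Choice.on (QM HK).
HB.instance Definition _ := GRing.Zmodule.on (QM HK).
Definition piM (x : R) : QM HK := piZ HA x.
Definition scQ (r : R^c) (q : QM HK) : QM HK := piM (repr q * (r : R)).
Lemma piM_eq x y : piM x = piM y <-> K (x - y). Proof. exact: piZ_eq. Qed.
Lemma piM_surj (q : QM HK) : exists x, piM x = q. Proof. exact: piZ_surj. Qed.
Lemma piMB x y : piM (x - y) = piM x - piM y. Proof. exact: piZB. Qed.
Lemma piM0 : piM 0 = 0. Proof. exact: piZ0. Qed.
Lemma piMD x y : piM (x + y) = piM x + piM y.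
Proof.
have hN : piM (- y) = - piM y by rewrite -sub0r piMB piM0 sub0r.
by rewrite -{1}[y]opprK piMB hN opprK.
Qed.
Lemma piM_sc (r : R^c) x : scQ r (piM x) = piM (x * (r : R)).
Proof.
rewrite /scQ piM_eq -mulrBl; apply: HK.2.
by apply/piM_eq; rewrite /piM /piZ reprK.
Qed.
Lemma scQA a b v : scQ a (scQ b v) = scQ (a * b) v.
Proof.
by case: (piM_surj v) => x <-; rewrite !piM_sc -mulrA.
Qed.
Lemma scQ1 : left_id 1 scQ.
Proof. by move=> v; case: (piM_surj v) => x <-; rewrite piM_sc mulr1. Qed.
Lemma scQDr : right_distributive scQ +%R.
Proof.
move=> a u v; case: (piM_surj u) => x <-; case: (piM_surj v) => y <-.
by rewrite -piMD !piM_sc mulrDl piMD.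
Qed.
Lemma scQDl v : {morph scQ^~ v: a b / a + b}.
Proof.
move=> a b; case: (piM_surj v) => x <-.
by rewrite !piM_sc -piMD -mulrDr.
Qed.
HB.instance Definition _ := GRing.Zmodule_isLmodule.Build (R^c) (QM HK)
  scQA scQ1 scQDr scQDl.
End QModule.

Lemma exists_quot_mod (R : nzRingType) (K : R -> Prop) : right_ideal K ->
  exists (M : lmodType R^c) (p : R -> M),
   (forall y, exists x, p x = y) /\ (forall x, p x = 0 <-> K x) /\
   (forall x y, p (x - y) = p x - p y) /\
   (forall x (r : R), (r : R^c) *: p x = p (x * r)).
Proof.
move=> HK; exists (QM HK HK); exists (piM HK); split; first exact: piM_surj.
split; first by move=> x; rewrite -(piM0 HK) piM_eq subr0.
split; first exact: piMB.
move=> x r; exact: piM_sc.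
Qed.

Section Gen.
Variables (R : nzRingType).
Implicit Types (I A B : R -> Prop).

Lemma TS0 I : two_sided_ideal I -> I 0. Proof. by move=> h; case: h.1.1. Qed.
Lemma TSB I x y : two_sided_ideal I -> I x -> I y -> I (x - y).
Proof. by move=> h; case: h.1.1 => _; apply. Qed.
Lemma TSr I x r : two_sided_ideal I -> I x -> I (x * r). Proof. by move=> h; apply: h.1.2. Qed.
Lemma TSl I x r : two_sided_ideal I -> I x -> I (r * x). Proof. by move=> h; apply: h.2.2. Qed.

Lemma mk_ts A : A 0 -> (forall x y, A x -> A y -> A (x - y)) ->
  (forall x r, A x -> A (x * r)) -> (forall x r, A x -> A (r * x)) -> two_sided_ideal A.
Proof. by move=> h0 hB hr hl; split; split. Qed.

Lemma max_prime I : maximal_ideal I -> prime_ideal I.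
Proof.
case=> HI [Hp Hm]; split=> //; split=> // A B HA HB HAB.
have key : forall C, two_sided_ideal C -> (exists c, C c /\ ~ I c) ->
    exists c i, C c /\ I i /\ 1 = c + i.
  move=> C HC [c [Cc nIc]].
  pose D := fun x => exists c i, C c /\ I i /\ x = c + i.
  have HD : two_sided_ideal D.
    apply: mk_ts.
    - by exists 0, 0; rewrite addr0; split; [exact: TS0|split; [exact: TS0|]].
    - move=> x y [c1 [i1 [h1 [h2 ->]]]] [c2 [i2 [h3 [h4 ->]]]].
      exists (c1 - c2), (i1 - i2); split; first exact: TSB.
      split; first exact: TSB.
      by rewrite opprD addrACA.
    - move=> x r [c1 [i1 [h1 [h2 ->]]]]; exists (c1 * r), (i1 * r).
      by rewrite mulrDl; split; [exact: TSr|split; [exact: TSr|]].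
    - move=> x r [c1 [i1 [h1 [h2 ->]]]]; exists (r * c1), (r * i1).
      by rewrite mulrDr; split; [exact: TSl|split; [exact: TSl|]].
  have sID : Defs.subset I D by move=> x Ix; exists 0, x; rewrite add0r; split=> //; exact: TS0.
  have : ~ Defs.proper D.
    move=> pD; apply: nIc; apply: (Hm D HD pD sID); exists c, 0.
    by rewrite addr0; split=> //; split=> //; exact: TS0.
  move=> npD; have : D 1.
    by apply: NNPP => h; apply: npD; exists 1.
  by move=> [c1 [i1 [? [? ?]]]]; exists c1, i1.
apply: NNPP => /not_or_and [hA hB].
have [a [Aa nIa]] : exists a, A a /\ ~ I a.
  apply: NNPP => h; apply: hA => x Ax; apply: NNPP => nIx; apply: h; by exists x.
have [b [Bb nIb]] : exists b, B b /\ ~ I b.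
  apply: NNPP => h; apply: hB => x Bx; apply: NNPP => nIx; apply: h; by exists x.
have [c [i [Cc [Ii e1]]]] := key A HA (ex_intro _ a (conj Aa nIa)).
have [d [j [Dd [Ij e2]]]] := key B HB (ex_intro _ b (conj Bb nIb)).
case: Hp => z; apply.
have -> : z = (c + i) * (d + j) * z by rewrite -e1 -e2 !mul1r.
apply: TSr => //.
rewrite mulrDl !mulrDr.
have hD : forall u v, I u -> I v -> I (u + v).
  by move=> u v hu hv; rewrite -[v]opprK; apply: TSB => //; rewrite -sub0r; apply: TSB => //; exact: TS0.
apply: (hD); first apply: (hD).
- exact: HAB.
- exact: TSl.
apply: (hD); [exact: TSr | exact: TSr].
Qed.
End Gen.

Lemma scM (R : nzRingType) (M : lmodType R^c) (x y : R) (m : M) :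
  ((x * y : R) : R^c) *: m = (y : R^c) *: ((x : R^c) *: m).
Proof. by rewrite scalerA. Qed.

Lemma prim_prime (R : nzRingType) (I : R -> Prop) :
  right_primitive_ideal I -> prime_ideal I.
Proof.
case=> M [[[m0 nz] Hs] Hann].
have HI : two_sided_ideal I.
  apply: mk_ts.
  - by apply/Hann => m; rewrite scale0r.
  - move=> x y /Hann hx /Hann hy; apply/Hann => m.
    by rewrite (scalerBl (x : R^c) (y : R^c)) hx hy subr0.
  - by move=> x r /Hann hx; apply/Hann => m; rewrite scM hx scaler0.
  - by move=> x r /Hann hx; apply/Hann => m; rewrite scM hx.
split=> //; split.
  by exists 1 => /Hann h; apply: nz; rewrite -(h m0) scale1r.
move=> A B HA HB HAB.
case: (classic (Defs.subset B I)) => hB; first by right.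
left; move=> a Aa.
have [b [Bb nIb]] : exists b, B b /\ ~ I b.
  apply: NNPP => h; apply: hB => x Bx; apply: NNPP => nIx; apply: h; by exists x.
have [m1 hm1] : exists m1 : M, (b : R^c) *: m1 <> 0.
  apply: NNPP => h; apply: nIb; apply/Hann => m; apply: NNPP => h2; apply: h; by exists m.
pose N := fun n : M => forall b', B b' -> (b' : R^c) *: n = 0.
case: (Hs N).
- by move=> b' _; rewrite scaler0.
- by move=> x y hx hy b' Bb'; rewrite scalerBr hx // hy // subr0.
- move=> r x hx b' Bb'; rewrite -scM; apply: hx; exact: TSl.
- move=> hN; apply/Hann => m; apply: hN => b' Bb'.
  rewrite -scM; move: (HAB a b' Aa Bb') => /Hann; apply.
- by move=> hN; exfalso; apply: hm1; apply: hN.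
Qed.

Lemma prime_elem (R : nzRingType) (I : R -> Prop) : prime_ideal I ->
  forall x y, (forall r, I (x * r * y)) -> I x \/ I y.
Proof.
case=> HI [_ HP] x y hxy.
pose A := fun z => forall r s, I (z * r * y * s).
pose B := fun w => forall z, A z -> I (z * w).
have HA : two_sided_ideal A.
  apply: mk_ts.
  - by move=> r s; rewrite !mul0r; exact: TS0.
  - by move=> u v hu hv r s; rewrite !mulrBl; apply: TSB.
  - by move=> u t hu r s; rewrite -(mulrA u t r); apply: hu.
  - by move=> u t hu r s; rewrite -!mulrA; apply: (TSl _ HI); rewrite !mulrA; apply: hu.
have HB : two_sided_ideal B.
  apply: mk_ts.
  - by move=> z _; rewrite mulr0; exact: TS0.
  - by move=> u v hu hv z hz; rewrite mulrBr; apply: TSB => //; [apply: hu|apply: hv].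
  - by move=> u t hu z hz; rewrite mulrA; apply: TSr => //; apply: hu.
  - move=> u t hu z hz; rewrite mulrA; apply: hu.
    by move=> r s; rewrite -(mulrA z t r); apply: hz.
case: (HP A B HA HB) => [a b Aa Bb|h|h]; first exact: Bb.
- left; apply: h => r s; apply: TSr => //.
- right; apply: h => z hz; move: (hz 1 1); by rewrite !mulr1.
Qed.

Lemma S_prime (R S : nzRingType) (I : R -> Prop) (f : {rmorphism R -> S}) :
  prime_ideal I -> quotient_map I f ->
  forall a b : S, (forall s, a * s * b = 0) -> a = 0 \/ b = 0.
Proof.
move=> HP [Hs Hk] a b; case: (Hs a) => x <-; case: (Hs b) => y <- hab.
case: (prime_elem HP (x := x) (y := y)).
- by move=> r; apply/Hk; rewrite !rmorphM hab.
- by move=> /Hk; left.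
- by move=> /Hk; right.
Qed.

Lemma jac0 (S : nzRingType) : jacobson (0 : S).
Proof. by move=> M [[[h _] _] _]. Qed.

Lemma jacr (S : nzRingType) (x r : S) : jacobson x -> jacobson (x * r).
Proof. by move=> h M hM; apply: hM.1.2; apply: h. Qed.

Lemma jac_zero (S : nzRingType) :
  (forall a b : S, (forall s, a * s * b = 0) -> a = 0 \/ b = 0) ->
  right_T_nilpotent (@jacobson S) -> forall x : S, jacobson x -> x = 0.
Proof.
move=> Hpr HT x Jx; apply: NNPP => nx.
pose g := fun p : S => x * epsilon (inhabits 0) (fun s => x * s * p <> 0).
have hg : forall p, p <> 0 -> g p * p <> 0.
  move=> p np; rewrite /g -mulrA.
  have : exists s, x * s * p <> 0.
    apply: NNPP => h; case: (Hpr x p) => // s; apply: NNPP => h2; apply: h; by exists s.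
  move=> /(epsilon_spec (inhabits 0)); by rewrite mulrA.
pose fix p k := if k is k'.+1 then g (p k') * p k' else 1.
pose a := fun k => g (p k).
have hp : forall k, rprod a k = p k by elim=> //= k ->.
have pnz : forall k, p k <> 0.
  elim=> [|k IH] /=; first exact/eqP/oner_neq0.
  exact: hg.
case: (HT a) => [n|k hk]; first exact: jacr.
by apply: (pnz k); rewrite -hp.
Qed.

Lemma ss_simple (S : nzRingType) : semisimple_ring S ->
  (forall a b : S, (forall s, a * s * b = 0) -> a = 0 \/ b = 0) ->
  forall K : S -> Prop, two_sided_ideal K -> nonzero_set K -> forall y, K y.
Proof.
move=> Hss Hpr K HK [b [Kb nb]].
case: (Hss K HK.1) => K' [HK' [Hcap Hsum]].
have K'0 : forall a, K' a -> a = 0.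
  move=> a Ka; case: (Hpr a b) => // s; apply: Hcap.
  - by apply: TSl.
  - by apply: HK'.2; apply: HK'.2.
case: (Hsum 1) => k [k' [Kk [Kk' e]]].
move: e; rewrite (K'0 _ Kk') addr0 => e y.
by rewrite -[y]mul1r e; apply: TSr.
Qed.

Lemma RI0 (S : nzRingType) (M : S -> Prop) : right_ideal M -> M 0.
Proof. by case=> [[]]. Qed.
Lemma RIB (S : nzRingType) (M : S -> Prop) x y : right_ideal M -> M x -> M y -> M (x - y).
Proof. by case=> [[_ h] _]; apply: h. Qed.
Lemma RIr (S : nzRingType) (M : S -> Prop) x r : right_ideal M -> M x -> M (x * r).
Proof. by case=> _ h; apply: h. Qed.
Lemma RI1 (S : nzRingType) (M : S -> Prop) : right_ideal M -> M 1 -> forall w, M w.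
Proof. by move=> h h1 w; rewrite -[w]mul1r; apply: RIr. Qed.
Lemma RIsub1 (S : nzRingType) (M : S -> Prop) z : right_ideal M -> M z -> M (1 - z) -> M 1.
Proof.
move=> h hz h1; have -> : (1 : S) = z - (0 - (1 - z)) by rewrite sub0r opprK addrC subrK.
by apply: RIB => //; apply: RIB => //; apply: RI0.
Qed.

Lemma prime_max_prim (R : nzRingType) (I : R -> Prop) :
  right_almost_perfect R -> nonzero_set I -> prime_ideal I ->
  maximal_ideal I /\ right_primitive_ideal I.
Proof.
move=> Hap Hnz HP; have HI := HP.1; have Hp := HP.2.1.
case: (exists_quot_ring HI Hp) => S [f Hq].
have Hperf := Hap I HI Hnz Hp S f Hq.
have Hpr := S_prime HP Hq.
have J0 := jac_zero Hpr Hperf.1.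
have Hss : semisimple_ring S.
  apply: (Hperf.2 S idfun); split; first by move=> y; exists y.
  move=> x; split; first by move=> /= ->; apply: jac0.
  exact: J0.
have Hsimp := ss_simple Hss Hpr.
case: Hq => fs fk.
have Hmax : maximal_ideal I.
  split=> //; split=> // B HB pB sIB x Bx; apply: NNPP => nIx.
  pose K := fun y => exists z, B z /\ f z = y.
  have HK : two_sided_ideal K.
    apply: mk_ts.
    - by exists 0; rewrite rmorph0; split=> //; exact: TS0.
    - move=> _ _ [u [Bu <-]] [v [Bv <-]]; exists (u - v); rewrite rmorphB.
      by split=> //; exact: TSB.
    - move=> _ r [u [Bu <-]]; case: (fs r) => t <-; exists (u * t); rewrite rmorphM.
      by split=> //; exact: TSr.
    - move=> _ r [u [Bu <-]]; case: (fs r) => t <-; exists (t * u); rewrite rmorphM.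
      by split=> //; exact: TSl.
  have : K 1.
    apply: Hsimp => //; exists (f x); split; first by exists x.
    by move/fk.
  case=> z [Bz fz].
  have h1z : B (1 - z) by apply: sIB; apply/fk; rewrite rmorphB rmorph1 fz subrr.
  case: pB => w; apply; apply: RI1 HB.1 _ w.
  exact: RIsub1 HB.1 Bz h1z.
split=> //.
have nJ1 : ~ jacobson (1 : S) by move=> /J0 /eqP; rewrite oner_eq0.
have [M [hM nM1]] : exists M : S -> Prop, maximal_right_ideal M /\ ~ M 1.
  apply: NNPP => h; apply: nJ1 => M hM; apply: NNPP => h2; apply: h; by exists M.
pose K' := fun x => M (f x).
have HM := hM.1.
have HK' : right_ideal K'.
  split; first split.
  - by rewrite /K' rmorph0; apply: RI0.
  - by move=> x y hx hy; rewrite /K' rmorphB; apply: RIB.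
  - by move=> x r hx; rewrite /K' rmorphM; apply: RIr.
case: (exists_quot_mod HK') => Mod [p [ps [pk [pB psc]]]].
exists Mod; split.
- split.
    by exists (p 1) => /pk; rewrite /K' rmorph1.
  move=> N N0 NB Nsc.
  pose Bs := fun x => N (p x).
  have HBs : right_ideal Bs.
    split; first split.
    - by rewrite /Bs (proj2 (pk 0) (RI0 HK')).
    - by move=> x y hx hy; rewrite /Bs pB; apply: NB.
    - by move=> x r hx; rewrite /Bs -psc; apply: Nsc.
  have sKB : forall x, K' x -> Bs x by move=> x /pk; rewrite /Bs => ->.
  case: (classic (Defs.proper Bs)) => pBs.
  + left => q Nq; case: (ps q) => x ex; rewrite -ex; apply/pk.
    pose T := fun y => exists z, Bs z /\ f z = y.
    have HT : right_ideal T.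
      split; first split.
      - by exists 0; rewrite rmorph0; split=> //; apply: RI0.
      - move=> _ _ [u [Bu <-]] [v [Bv <-]]; exists (u - v); rewrite rmorphB.
        by split=> //; apply: RIB.
      - move=> _ r [u [Bu <-]]; case: (fs r) => t <-; exists (u * t); rewrite rmorphM.
        by split=> //; apply: RIr.
    have pT : Defs.proper T.
      apply: NNPP => npT; have : T 1 by apply: NNPP => h; apply: npT; exists 1.
      case=> z [Bz fz]; case: pBs => w; apply; apply: (RI1 HBs _ w).
      apply: (RIsub1 HBs Bz); apply: sKB.
      by rewrite /K' rmorphB rmorph1 fz subrr; apply: RI0.
    have sMT : Defs.subset M T.
      move=> y My; case: (fs y) => u eu; exists u; split=> //.
      by apply: sKB; rewrite /K' eu.
    apply: (hM.2.2 T HT pT sMT); exists x; split=> //.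
    by rewrite /Bs ex.
  + right => q; case: (ps q) => x <-.
    by apply: NNPP => h; apply: pBs; exists x.
- move=> r; split.
  + move=> Ir m; case: (ps m) => x <-; rewrite psc; apply/pk.
    by rewrite /K' rmorphM (proj2 (fk r) Ir) mulr0; apply: RI0.
  + move=> hr; pose A := fun r => forall x, K' (x * r).
    have HA : two_sided_ideal A.
      apply: mk_ts.
      - by move=> x; rewrite mulr0; apply: RI0.
      - by move=> u v hu hv x; rewrite mulrBr; apply: RIB.
      - by move=> u t hu x; rewrite mulrA; apply: RIr.
      - by move=> u t hu x; rewrite mulrA; apply: hu.
    have pA : Defs.proper A by exists 1 => h; apply: nM1; move: (h 1); rewrite /K' mulr1 rmorph1.
    have sIA : Defs.subset I A.
      move=> u Iu x; rewrite /K' rmorphM (proj2 (fk u) Iu) mulr0; apply: RI0 HM.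
    apply: (Hmax.2.2 A HA pA sIA) => x; apply/pk; rewrite -psc; exact: hr.
Qed.

Theorem corollary3p3 (R : nzRingType) (I : R -> Prop) :
  right_almost_perfect R -> two_sided_ideal I -> nonzero_set I ->
  (maximal_ideal I <-> prime_ideal I) /\
  (prime_ideal I <-> right_primitive_ideal I).
Proof.
move=> Hap HI Hnz; split; split.
- exact: max_prime.
- by move=> HP; case: (prime_max_prim Hap Hnz HP).
- by move=> HP; case: (prime_max_prim Hap Hnz HP).
- exact: prim_prime.
Qed.
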